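(* Let $\alpha=(A_0\leftarrow\cdots\leftarrow A_m)$ and $\beta=(B_0\leftarrow\cdots\leftarrow B_n)$ be universal evolutions for vertices $A_m$ and $B_n$, respectively, of a monotonous quiver, and suppose $A_m\le B_n$. If $m=n\ge1$, then $A_{m-1}\sim B_{n-1}$. If $m<n$, then $A_m\le B_{n-1}$.
   Context: A quiver consists of a class of vertices and, for each ordered pair of vertices $(A,B)$, a set of edges $A\to B$ (loops and multiple edges allowed). An evolution of length $m\ge 0$ is a sequence $A_0\leftarrow A_1\leftarrow\cdots\leftarrow A_m$ of vertices together with edges $A_k\to A_{k-1}$ ($1\le k\le m$); $A_0$ is its initial and $A_m$ its terminal vertex. Write $A\le B$ ($A$ is an ancestor of $B$) if there is an evolution with initial vertex $A$ and terminal vertex $B$; $A,B$ are isotypic ($A\sim B$) if $A\le B$ and $B\le A$. A vertex $A$ is primitive if every ancestor of $A$ is isotypic to $A$. A full evolution for $X$ is an evolution with primitive initial vertex and terminal vertex $X$. The height $h(X)$ is the smallest length of a full evolution for $X$ ($\infty$ if none). An evolution $\alpha=(A_0\leftarrow\cdots\leftarrow A_m)$ embeds in $\beta=(B_0\leftarrow\cdots\leftarrow B_n)$ if $m\le n$ and there are $0\le r_0<\cdots<r_m\le n$ with $A_k\sim B_{r_k}$. A universal evolution for $X$ is a full evolution for $X$ embedding in every full evolution for $X$. A quiver is monotonous if $h(A)\ge h(B)$ for every edge $A\to B$. *)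

(* Defs.v *)
From Stdlib Require Import Arith Lia.

Record quiver := Quiver { vert : Type; edge : vert -> vert -> Type }.

Record evolution (Q : quiver) := Evolution {
  ev_len : nat;
  ev_v : nat -> vert Q;
  ev_e : forall k, 1 <= k <= ev_len -> edge Q (ev_v k) (ev_v (k - 1)) }.
Arguments ev_len {Q}.
Arguments ev_v {Q}.

Definition initial {Q} (a : evolution Q) : vert Q := ev_v a 0.
Definition terminal {Q} (a : evolution Q) : vert Q := ev_v a (ev_len a).

Definition ancestor {Q} (A B : vert Q) : Prop :=
  exists a : evolution Q, initial a = A /\ terminal a = B.

Definition isotypic {Q} (A B : vert Q) : Prop := ancestor A B /\ ancestor B A.

Definition primitive {Q} (A : vert Q) : Prop :=
  forall B, ancestor B A -> isotypic B A.

Definition full_evolution {Q} (X : vert Q) (a : evolution Q) : Prop :=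
  primitive (initial a) /\ terminal a = X.

(* h(X) = n (finite height). h(X) = infinity iff no n satisfies this. *)
Definition has_height {Q} (X : vert Q) (n : nat) : Prop :=
  (exists a, full_evolution X a /\ ev_len a = n) /\
  (forall a, full_evolution X a -> n <= ev_len a).

Definition height_ge {Q} (A B : vert Q) : Prop :=
  forall n, has_height A n -> exists k, has_height B k /\ k <= n.

Definition embeds {Q} (a b : evolution Q) : Prop :=
  ev_len a <= ev_len b /\
  exists r : nat -> nat,
    (forall k, k < ev_len a -> r k < r (S k)) /\
    r (ev_len a) <= ev_len b /\
    (forall k, k <= ev_len a -> isotypic (ev_v a k) (ev_v b (r k))).

Definition universal_evolution {Q} (X : vert Q) (a : evolution Q) : Prop :=
  full_evolution X a /\ forall b, full_evolution X b -> embeds a b.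

Definition monotonous (Q : quiver) : Prop :=
  forall A B : vert Q, edge Q A B -> height_ge A B.

(* Main.v *)
Require Import Defs.
From Stdlib Require Import Arith.
From Stdlib Require Import Lia Classical.

Definition edge_tr {Q : quiver} {x x' y y' : vert Q} :
  x = x' -> y = y' -> edge Q x y -> edge Q x' y'.
Proof. intros -> ->; exact (fun e => e). Defined.

Lemma sub_evo Q (e : evolution Q) i j : i <= j <= ev_len e ->
  exists d : evolution Q, ev_len d = j - i /\ forall k, ev_v d k = ev_v e (i + k).
Proof.
  intros H.
  unshelve eexists (Evolution Q (j - i) (fun k => ev_v e (i+k)) _).
  - intros k Hk. refine (edge_tr _ _ (@ev_e Q e (i+k) _)).
    + reflexivity.
    + f_equal; lia.
    + lia.
  - simpl. split; auto.
Qed.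

Lemma sub_anc Q (e : evolution Q) i j : i <= j <= ev_len e ->
  ancestor (ev_v e i) (ev_v e j).
Proof.
  intros H. destruct (sub_evo Q e i j H) as [d [Hl Hv]].
  exists d. unfold initial, terminal. rewrite Hl, !Hv. split; f_equal; lia.
Qed.

Lemma concat Q (e1 e2 : evolution Q) : terminal e1 = initial e2 ->
  exists c : evolution Q, ev_len c = ev_len e1 + ev_len e2 /\
    (forall k, k <= ev_len e1 -> ev_v c k = ev_v e1 k) /\
    (forall k, ev_v c (ev_len e1 + k) = ev_v e2 k).
Proof.
  intros Ht.
  set (v := fun k => if k <=? ev_len e1 then ev_v e1 k else ev_v e2 (k - ev_len e1)).
  unshelve eexists (Evolution Q (ev_len e1 + ev_len e2) v _).
  - intros k Hk. destruct (le_gt_dec k (ev_len e1)) as [Hl|Hg].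
    + refine (edge_tr _ _ (@ev_e Q e1 k _)).
      * unfold v. rewrite (proj2 (Nat.leb_le _ _) Hl). reflexivity.
      * unfold v. rewrite (proj2 (Nat.leb_le (k-1) _)) by lia. reflexivity.
      * lia.
    + refine (edge_tr _ _ (@ev_e Q e2 (k - ev_len e1) _)).
      * unfold v. rewrite (proj2 (Nat.leb_gt k _)) by lia. reflexivity.
      * unfold v. destruct (Nat.leb_spec (k-1) (ev_len e1)).
        -- replace (k-1) with (ev_len e1) by lia.
           replace (k - ev_len e1 - 1) with 0 by lia. symmetry. exact Ht.
        -- f_equal; lia.
      * lia.
  - simpl. split; [reflexivity|split].
    + intros k Hk. unfold v. rewrite (proj2 (Nat.leb_le _ _) Hk). reflexivity.
    + intros k. unfold v. destruct (Nat.leb_spec (ev_len e1 + k) (ev_len e1)).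
      * replace k with 0 by lia. rewrite Nat.add_0_r. exact Ht.
      * f_equal; lia.
Qed.

Lemma anc_trans Q (A B C : vert Q) : ancestor A B -> ancestor B C -> ancestor A C.
Proof.
  intros [e1 [H1 H2]] [e2 [H3 H4]].
  destruct (concat Q e1 e2) as [c [Hl [Hv1 Hv2]]]; [congruence|].
  exists c. unfold initial, terminal in *. split.
  - rewrite Hv1 by lia. exact H1.
  - rewrite Hl, Hv2. exact H4.
Qed.

Lemma height_unique Q (X : vert Q) n k : has_height X n -> has_height X k -> n = k.
Proof.
  intros [[a [Ha1 Ha2]] Hn] [[b [Hb1 Hb2]] Hk].
  specialize (Hn b Hb1). specialize (Hk a Ha1). lia.
Qed.

Lemma height_exists Q (X : vert Q) e : full_evolution X e ->
  exists h, has_height X h /\ h <= ev_len e.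
Proof.
  assert (G : forall n e0, full_evolution X e0 -> ev_len e0 = n ->
            exists h, has_height X h /\ h <= n).
  { intros n. induction n as [n IH] using lt_wf_ind. intros e0 He Hl.
    destruct (classic (exists a, full_evolution X a /\ ev_len a < n)) as [[a [Ha Hal]]|Hno].
    - destruct (IH _ Hal a Ha eq_refl) as [h [Hh Hhl]]. exists h. split; auto. lia.
    - exists n. split; [split|lia].
      + exists e0; auto.
      + intros a Ha. destruct (le_gt_dec n (ev_len a)); auto.
        exfalso. apply Hno. exists a. split; auto. }
  intros He. exact (G _ e He eq_refl).
Qed.

Lemma height_mono Q (HQ : monotonous Q) (e : evolution Q) :
  forall j, j <= ev_len e -> forall n, has_height (ev_v e j) n ->
    exists k, has_height (ev_v e 0) k /\ k <= n.
Proof.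
  induction j as [|j IH]; intros Hj n Hn.
  - exists n; auto.
  - pose proof (HQ _ _ (@ev_e Q e (S j) ltac:(lia))) as Hg.
    replace (S j - 1) with j in Hg by lia.
    destruct (Hg n Hn) as [k [Hk Hkn]].
    destruct (IH ltac:(lia) k Hk) as [k' [Hk' Hk'n]].
    exists k'. split; auto. lia.
Qed.

Theorem lemma7p2 (Q : quiver) (HQ : monotonous Q) (a b : evolution Q)
  (Ha : universal_evolution (terminal a) a)
  (Hb : universal_evolution (terminal b) b)
  (Hle : ancestor (terminal a) (terminal b)) :
  (ev_len a = ev_len b -> 1 <= ev_len a ->
     isotypic (ev_v a (ev_len a - 1)) (ev_v b (ev_len b - 1))) /\
  (ev_len a < ev_len b -> ancestor (terminal a) (ev_v b (ev_len b - 1))).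
Proof.
  destruct Hle as [g [Hg1 Hg2]].
  destruct (concat Q a g) as [c [Hcl [Hcv1 Hcv2]]]; [congruence|].
  assert (Hcf : full_evolution (terminal b) c).
  { split.
    - unfold initial. rewrite Hcv1 by lia. exact (proj1 (proj1 Ha)).
    - unfold terminal. rewrite Hcl, Hcv2. exact Hg2. }
  destruct (proj2 Hb c Hcf) as [_ [r [Hr1 [Hr2 Hr3]]]].
  assert (Hrge : forall k, k <= ev_len b -> k <= r k).
  { induction k; intros Hk; [lia|]. specialize (IHk ltac:(lia)).
    specialize (Hr1 k ltac:(lia)). lia. }
  assert (Hrle : forall k, k <= ev_len b -> r k <= ev_len c).
  { intros k Hk. assert (forall d, d <= ev_len b - k -> r (ev_len b - d) <= ev_len c).
    { induction d; intros Hd.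
      - rewrite Nat.sub_0_r; exact Hr2.
      - specialize (IHd ltac:(lia)). specialize (Hr1 (ev_len b - S d) ltac:(lia)).
        replace (S (ev_len b - S d)) with (ev_len b - d) in Hr1 by lia. lia. }
    replace k with (ev_len b - (ev_len b - k)) by lia. apply H. lia. }
  assert (Key : ev_len a <= r (ev_len b - 1) -> 1 <= ev_len b ->
            ancestor (terminal a) (ev_v b (ev_len b - 1))).
  { intros H1 H2. apply anc_trans with (ev_v c (r (ev_len b - 1))).
    - unfold terminal. rewrite <- (Hcv1 (ev_len a)) by lia.
      apply sub_anc. split; auto. apply Hrle. lia.
    - apply (proj2 (Hr3 (ev_len b - 1) ltac:(lia))). }
  split.
  - intros Heq H1.
    pose proof (Hrge (ev_len b - 1) ltac:(lia)) as Hr.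
    destruct (Nat.eq_dec (r (ev_len b - 1)) (ev_len b - 1)) as [E|E].
    + pose proof (Hr3 (ev_len b - 1) ltac:(lia)) as Hi. rewrite E in Hi.
      rewrite Hcv1 in Hi by lia. rewrite Heq. destruct Hi; split; auto.
    + exfalso. specialize (Key ltac:(lia) ltac:(lia)) as [dl [Hd1 Hd2]].
      assert (HhA : has_height (terminal a) (ev_len a)).
      { split.
        - exists a; split; auto. exact (proj1 Ha).
        - intros e He. exact (proj1 (proj2 Ha e He)). }
      destruct (sub_evo Q b 0 (ev_len b - 1) ltac:(lia)) as [bt [Hbl Hbv]].
      assert (Hbf : full_evolution (ev_v b (ev_len b - 1)) bt).
      { split.
        - unfold initial. rewrite Hbv. exact (proj1 (proj1 Hb)).
        - unfold terminal. rewrite Hbl, Hbv. f_equal. lia. }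
      destruct (height_exists Q _ bt Hbf) as [h [Hh Hhl]].
      rewrite <- Hd2 in Hh. unfold terminal in Hh.
      destruct (height_mono Q HQ dl (ev_len dl) (le_n _) h Hh) as [k [Hk Hkh]].
      fold (initial dl) in Hk. rewrite Hd1 in Hk.
      pose proof (height_unique Q _ _ _ HhA Hk). lia.
  - intros Hlt. apply Key; [|lia].
    pose proof (Hrge (ev_len b - 1) ltac:(lia)). lia.
Qed.
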